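(* Let $D$ be an infinite commutative unital integral domain. The graded pair $(R,S)$ is relatively free in the variety of graded pairs determined by $Id(M_2(D),sl_2(D))$. That is: $(R,S)$ satisfies every weak graded identity of $(M_2(D),sl_2(D))$, and for every graded pair $(A,L)$ satisfying all weak graded identities of $(M_2(D),sl_2(D))$ and every choice of elements $a_i\in L\cap A^{(0)}$, $b_i\in L\cap A^{(1)}$ ($i\ge1$), there is a unique homomorphism of graded unital algebras $\psi\colon R\to A$ with $\psi(Y_i)=a_i$, $\psi(Z_i)=b_i$ for all $i$, and it satisfies $\psi(S)\subseteq L$.
   Context: Let $Y=\{y_1,y_2,\dots\}$ and $Z=\{z_1,z_2,\dots\}$ be disjoint countable sets of variables, $X=Y\cup Z$, and let $D\langle X\rangle$ be the free unital associative $D$-algebra on $X$, $\mathbb{Z}_2$-graded by declaring the $y_i$ even and the $z_i$ odd (a monomial is even iff it contains an even number of letters from $Z$, counted with multiplicity). Let $L\langle X\rangle$ be the Lie subalgebra of $D\langle X\rangle$ (with bracket $[a,b]=ab-ba$) generated by $X$, with the induced grading $L\langle X\rangle^{(0)}\oplus L\langle X\rangle^{(1)}$. A graded pair $(A,L)$ consists of a $\mathbb{Z}_2$-graded associative unital $D$-algebra $A=A^{(0)}\oplus A^{(1)}$ and a Lie subalgebra $L$ of $A$ (under the commutator) with $L=(L\cap A^{(0)})\oplus(L\cap A^{(1)})$. A polynomial $f(y_1,\dots,y_k,z_1,\dots,z_m)\in D\langle X\rangle$ is a weak graded identity of $(A,L)$ if $f$ vanishes under every substitution of each $y_i$ by an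 element of $L\cap A^{(0)}$ and each $z_j$ by an element of $L\cap A^{(1)}$; $Id(A,L)$ denotes the set of all weak graded identities of $(A,L)$. $M_2(D)$ is graded with diagonal matrices even and off-diagonal matrices odd, and $sl_2(D)$ (traceless matrices) carries the induced grading. Let $\mathcal{A}=D[\alpha_i,\beta_i,\gamma_i\mid i\ge1]$ be the commutative polynomial ring and in $M_2(\mathcal A)$ put $Y_i=\begin{pmatrix}\alpha_i&0\\0&-\alpha_i\end{pmatrix}$, $Z_i=\begin{pmatrix}0&\beta_i\\ \gamma_i&0\end{pmatrix}$. Let $R$ be the unital associative subalgebra of $M_2(\mathcal A)$ generated by all $Y_i,Z_i$, and $S$ the Lie subalgebra (under the commutator) generated by them; $R=R_0\oplus R_1$ is graded with the $Y_i$ even and the $Z_i$ odd, and $S$ has the induced grading $S_i=S\cap R_i$. *)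

(* Defs.v *)
From HB Require Import structures.
From mathcomp Require Import all_boot all_algebra.
From mathcomp Require Import finmap.
From mathcomp.multinomials Require Import monalg.

Set Implicit Arguments.
Unset Strict Implicit.
Unset Printing Implicit Defensive.

Import GRing.Theory.
Local Open Scope ring_scope.

(* Letters: (false, i) stands for y_i (even), (true, i) for z_i (odd).  *)
Definition letter : choiceType := (bool * nat)%type.

Definition freeAlg (D : nzRingType) := {malg D[{fmonom letter}]}.

Definition feval (D : nzRingType) (A : pzRingType) (sc : D -> A)
    (s : letter -> A) (f : freeAlg D) : A :=
  \sum_(m <- msupp f) sc f@_m * \prod_(x <- fmonom_val m) s x.

Definition weak_graded_identity (D : nzRingType) (A : pzRingType)
    (sc : D -> A) (A0 A1 L : A -> Prop) (f : freeAlg D) : Prop :=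
  forall s : letter -> A,
    (forall i, L (s (false, i)) /\ A0 (s (false, i))) ->
    (forall i, L (s (true, i)) /\ A1 (s (true, i))) ->
    feval sc s f = 0.

(* Graded pairs (A, L).  The grading is Ag : bool -> A -> Prop with
   Ag false = A^(0), Ag true = A^(1). *)
Definition submodule (D : nzRingType) (A : lmodType D) (P : A -> Prop) :=
  [/\ P 0, (forall x y, P x -> P y -> P (x + y))
         & (forall (d : D) x, P x -> P (d *: x))].

Definition graded_algebra (D : comNzRingType) (A : algType D)
    (Ag : bool -> A -> Prop) : Prop :=
  [/\ submodule (Ag false) /\ submodule (Ag true),
      (forall a, exists a0 a1, [/\ Ag false a0, Ag true a1 & a = a0 + a1]),
      (forall a, Ag false a -> Ag true a -> a = 0),
      Ag false 1
    & (forall (i j : bool) x y, Ag i x -> Ag j y -> Ag (i (+) j) (x * y))].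

Definition lie_subalgebra (D : comNzRingType) (A : algType D) (L : A -> Prop) :=
  submodule L /\ (forall x y, L x -> L y -> L (x * y - y * x)).

Definition graded_pair (D : comNzRingType) (A : algType D)
    (Ag : bool -> A -> Prop) (L : A -> Prop) : Prop :=
  [/\ graded_algebra Ag, lie_subalgebra L
    & (forall x, L x -> exists x0 x1,
          [/\ L x0, Ag false x0, L x1, Ag true x1 & x = x0 + x1])].

Definition M2grading (D : comNzRingType) (b : bool) (m : 'M[D]_2) : Prop :=
  if b then m 0 0 = 0 /\ m 1 1 = 0 else m 0 1 = 0 /\ m 1 0 = 0.

Definition sl2 (D : comNzRingType) (m : 'M[D]_2) : Prop := \tr m = 0.

Definition Id_M2sl2 (D : comNzRingType) (f : freeAlg D) : Prop :=
  weak_graded_identity (fun d : D => d%:A : 'M[D]_2)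
    (M2grading false) (M2grading true) (@sl2 D) f.

(* The generic matrices.  calA = D[alpha_i, beta_i, gamma_i | i],
   variable (i, 0) = alpha_i, (i, 1) = beta_i, (i, 2) = gamma_i. *)
Definition genvar : choiceType := (nat * 'I_3)%type.

Definition calA (D : comNzRingType) := {malg D[{cmonom genvar}]}.

Definition gvar (D : comNzRingType) (i : nat) (k : 'I_3) : calA D :=
  mkmalgU (ucm ((i, k) : genvar)) 1.

Definition mx2 (T : nzRingType) (a b c d : T) : 'M[T]_2 :=
  \matrix_(r < 2, s < 2)
    if r == 0 :> nat then (if s == 0 :> nat then a else b)
    else (if s == 0 :> nat then c else d).

Definition Ygen (D : comNzRingType) (i : nat) : 'M[calA D]_2 :=
  mx2 (gvar D i 0) 0 0 (- gvar D i 0).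

Definition Zgen (D : comNzRingType) (i : nat) : 'M[calA D]_2 :=
  mx2 0 (gvar D i 1) (gvar D i 2) 0.

Definition scA (D : comNzRingType) (d : D) (m : 'M[calA D]_2) : 'M[calA D]_2 :=
  (d%:MP : calA D) *: m.

Inductive inR (D : comNzRingType) : 'M[calA D]_2 -> Prop :=
  | inR_1 : inR 1
  | inR_Y i : inR (Ygen D i)
  | inR_Z i : inR (Zgen D i)
  | inR_add x y : inR x -> inR y -> inR (x + y)
  | inR_mul x y : inR x -> inR y -> inR (x * y)
  | inR_scale (d : D) x : inR x -> inR (scA d x).

Inductive Rgrad (D : comNzRingType) : bool -> 'M[calA D]_2 -> Prop :=
  | Rgrad_1 : Rgrad false 1
  | Rgrad_Y i : Rgrad false (Ygen D i)
  | Rgrad_Z i : Rgrad true (Zgen D i)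
  | Rgrad_add b x y : Rgrad b x -> Rgrad b y -> Rgrad b (x + y)
  | Rgrad_mul b c x y : Rgrad b x -> Rgrad c y -> Rgrad (b (+) c) (x * y)
  | Rgrad_scale b (d : D) x : Rgrad b x -> Rgrad b (scA d x).

Inductive inS (D : comNzRingType) : 'M[calA D]_2 -> Prop :=
  | inS_Y i : inS (Ygen D i)
  | inS_Z i : inS (Zgen D i)
  | inS_add x y : inS x -> inS y -> inS (x + y)
  | inS_scale (d : D) x : inS x -> inS (scA d x)
  | inS_br x y : inS x -> inS y -> inS (x * y - y * x).

(* psi : R -> A is a homomorphism of graded unital D-algebras
   (psi is given as a function on M_2(calA); only its values on R matter) *)
Definition graded_alg_hom_on_R (D : comNzRingType) (A : algType D)
    (Ag : bool -> A -> Prop) (psi : 'M[calA D]_2 -> A) : Prop :=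
  [/\ psi 1 = 1,
      (forall x y, inR x -> inR y -> psi (x + y) = psi x + psi y),
      (forall x y, inR x -> inR y -> psi (x * y) = psi x * psi y),
      (forall (d : D) x, inR x -> psi (scA d x) = d *: psi x)
    & (forall b x, Rgrad b x -> Ag b (psi x))].

(* Main.v *)
Require Import Defs.
From HB Require Import structures.
From mathcomp Require Import all_boot all_algebra.
From mathcomp Require Import finmap.
From mathcomp.multinomials Require Import monalg.
From Stdlib Require Import ClassicalEpsilon.

Set Implicit Arguments.
Unset Strict Implicit.
Unset Printing Implicit Defensive.

Import GRing.Theory.
Local Open Scope ring_scope.
Local Open Scope fset_scope.
Local Open Scope ring_scope.
Section Feval.
Variables (D : nzRingType) (A : pzRingType) (sc : {rmorphism D -> A}) (s : letter -> A).

Definition Pm (m : {fmonom letter}) : A := \prod_(x <- fmonom_val m) s x.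

Lemma fevalEw (d : {fset {fmonom letter}}) (f : freeAlg D) :
  (msupp f `<=` d)%fset -> feval sc s f = \sum_(m <- d) sc f@_m * Pm m.
Proof.
move=> le; rewrite /feval; apply: big_fset_incl => // m _ /mcoeff_outdom ->.
by rewrite rmorph0 mul0r.
Qed.

Lemma feval0 : feval sc s 0 = 0.
Proof. by rewrite /feval msupp0 big_seq_fset0. Qed.

Lemma fevalD f g : feval sc s (f + g) = feval sc s f + feval sc s g.
Proof.
rewrite (@fevalEw (msupp f `|` msupp g)) ?msuppD_le //.
rewrite (@fevalEw (msupp f `|` msupp g) f) ?fsubsetUl //.
rewrite (@fevalEw (msupp f `|` msupp g) g) ?fsubsetUr //.
by rewrite -big_split /=; apply: eq_bigr => m _; rewrite mcoeffD rmorphD mulrDl.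
Qed.

Lemma fevalN f : feval sc s (- f) = - feval sc s f.
Proof.
rewrite /feval msuppN -sumrN; apply: eq_bigr => m _.
by rewrite mcoeffN rmorphN mulNr.
Qed.

Lemma feval_sum (I : Type) (r : seq I) (F : I -> freeAlg D) :
  feval sc s (\sum_(i <- r) F i) = \sum_(i <- r) feval sc s (F i).
Proof. by apply: (big_morph _ fevalD feval0). Qed.

Lemma fevalU c m : feval sc s << c *g m >> = sc c * Pm m.
Proof.
rewrite /feval msuppU; case: eqP => [->|_]; first by rewrite big_seq_fset0 rmorph0 mul0r.
by rewrite big_seq_fset1 mcoeffUU.
Qed.

Lemma PmM m1 m2 : Pm (mmul m1 m2) = Pm m1 * Pm m2.
Proof. by rewrite /Pm -[mmul m1 m2]/(fmmul m1 m2) fmmulE /= big_cat. Qed.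

Hypothesis central : forall d a, sc d * a = a * sc d.

Lemma fevalM f g : feval sc s (f * g) = feval sc s f * feval sc s g.
Proof.
rewrite malgME feval_sum [feval sc s f]/feval mulr_suml; apply: eq_bigr => m1 _.
rewrite feval_sum [feval sc s g]/feval mulr_sumr; apply: eq_bigr => m2 _.
rewrite fevalU rmorphM PmM -!mulrA; congr (_ * _).
by rewrite !mulrA central.
Qed.

Lemma feval1 : feval sc s 1 = 1.
Proof.
have -> : (1 : freeAlg D) = << (1 : D) *g (mone : {fmonom letter}) >> by [].
by rewrite fevalU rmorph1 mul1r /Pm -[mone]/(fmone letter) fmoneE big_nil.
Qed.

Lemma fevalZ c f : feval sc s (c *: f) = sc c * feval sc s f.
Proof.
rewrite -mul_malgC fevalM -[c%:MP]/(<< c *g (mone : {fmonom letter}) >>) fevalU.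
by rewrite /Pm -[mone]/(fmone letter) fmoneE big_nil mulr1.
Qed.

Lemma fevalX x : feval sc s << fmu x >> = s x.
Proof. by rewrite fevalU rmorph1 mul1r /Pm fmuE /= big_seq1. Qed.

End Feval.

Lemma feval_ext (D : nzRingType) (A : pzRingType) (sc sc' : D -> A) (s s' : letter -> A) f :
  sc =1 sc' -> s =1 s' -> feval sc s f = feval sc' s' f.
Proof.
move=> e1 e2; rewrite /feval; apply: eq_bigr => m _; rewrite e1; congr (_ * _).
by apply: eq_bigr.
Qed.

Lemma feval_map (D : nzRingType) (A B : pzRingType) (phi : {rmorphism A -> B})
   (sc : D -> A) (s : letter -> A) f :
  phi (feval sc s f) = feval (phi \o sc) (phi \o s) f.
Proof.
rewrite /feval rmorph_sum; apply: eq_bigr => m _; rewrite rmorphM rmorph_prod //.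
Qed.
Section Ev.
Variable (D : comNzRingType).

Definition hv (v : genvar -> D) (m : cmonom genvar) : D :=
  \prod_(i <- finsupp m) v i ^+ m i.

Lemma hvEw (v : genvar -> D) (m : cmonom genvar) (d : {fset genvar}) : finsupp m `<=` d ->
  hv v m = \prod_(i <- d) v i ^+ m i.
Proof.
move=> le; rewrite /hv; apply: big_fset_incl => // i _.
by rewrite -cmE_eq0 => /eqP ->; rewrite expr0.
Qed.

Lemma hv_mmorph (v : genvar -> D) : mmorphism (hv v).
Proof.
split; last by rewrite /hv mdom1 big_seq_fset0.
move=> m1 m2 /=.
rewrite (@hvEw v (mmul m1 m2) (finsupp m1 `|` finsupp m2)) ?mdomD //.
rewrite (@hvEw v m1 (finsupp m1 `|` finsupp m2)) ?fsubsetUl //.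
rewrite (@hvEw v m2 (finsupp m1 `|` finsupp m2)) ?fsubsetUr //.
by rewrite -big_split /=; apply: eq_bigr => i _; rewrite cmM exprD.
Qed.

HB.instance Definition _ v := isMultiplicative.Build (cmonom genvar) D (hv v) (hv_mmorph v).

Definition ev (v : genvar -> D) : calA D -> D := mmap (idfun : D -> D) (hv v).
HB.instance Definition _ v := GRing.RMorphism.on (ev v).

Lemma evU v c m : ev v << c *g m >> = c * hv v m.
Proof. by rewrite /ev mmapU. Qed.

Lemma evC v c : ev v c%:MP = c.
Proof. by rewrite /ev mmapC. Qed.

Definition Xv (k : genvar) : calA D := mkmalgU (ucm k) 1.

Lemma hvU v k : hv v (ucm k) = v k.
Proof. by rewrite /hv mdomU big_seq_fset1 cmUU expr1. Qed.

Lemma evX v k : ev v (Xv k) = v k.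
Proof. by rewrite /Xv evU hvU mul1r. Qed.

Fixpoint upow (k : genvar) (j : nat) : cmonom genvar :=
  if j is j'.+1 then mmul (ucm k) (upow k j') else mone.

Lemma upowE k j i : upow k j i = (j * (k == i))%N.
Proof.
elim: j => [|j IH] /=; first by rewrite cm1.
by rewrite cmM IH cmU mulSn.
Qed.

Lemma upowS k j : upow k j.+1 = mmul (ucm k) (upow k j).
Proof. reflexivity. Qed.

Lemma XvX k j : Xv k ^+ j = << upow k j >>.
Proof.
elim: j => [|j IH]; first by rewrite expr0.
rewrite exprS IH /Xv malgM_def fgmulUU mulr1 -upowS; exact: erefl.
Qed.

Definition dropv (k : genvar) (m : cmonom genvar) := divcm m (upow k (m k)).

Lemma dropvE k m i : dropv k m i = if i == k then 0%N else m i.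
Proof.
rewrite /dropv divcmE upowE eq_sym; case: eqP => [->|_]; first by rewrite muln1 subnn.
by rewrite muln0 subn0.
Qed.

Lemma dropv_mul k m : mmul (dropv k m) (upow k (m k)) = m.
Proof.
apply/eqP/cmP => i; rewrite cmM dropvE upowE eq_sym.
by case: eqP => [->|_]; rewrite ?muln1 ?muln0 ?addn0.
Qed.

Lemma finsupp_dropv k m i : i \in finsupp (dropv k m) -> (i != k) && (i \in finsupp m).
Proof.
rewrite -!cmE_neq0 dropvE; case: (eqVneq i k) => [->|ne]; first by rewrite !eqxx.
by move=> ->.
Qed.

End Ev.

Section PI.
Variables (D : idomainType) (Hinf : forall s : seq D, exists d : D, d \notin s).

Lemma uniq_seq n : exists s : seq D, uniq s /\ size s = n.
Proof.
elim: n => [|n [s [us ss]]]; first by exists [::].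
have [d hd] := Hinf s; exists (d :: s); by rewrite /= hd us ss.
Qed.

Lemma poly_inf (q : {poly D}) : (forall t, q.[t] = 0) -> q = 0.
Proof.
move=> H; have [s [us ss]] := uniq_seq (size q).
apply: (roots_geq_poly_eq0 (rs := s)) => //; last by rewrite ss.
by apply/allP => x _; rewrite /root H.
Qed.

Definition supp_in (ks : seq genvar) (e : calA D) :=
  forall m, m \in msupp e -> forall i, i \in finsupp m -> i \in ks.

Lemma PI_ks ks e : supp_in ks e -> (forall v, ev v e = 0) -> e = 0.
Proof.
elim: ks e => [|k ks IH] e Hs Hv.
  have Hm : forall m, m \in msupp e -> m = mone.
    move=> m /Hs Hm; apply/eqP/cmP => i; rewrite cm1; apply/eqP.
    by rewrite cmE_eq0; apply/negP => /Hm.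
  have He : e = (e@_mone)%:MP.
    apply/malgP => m; rewrite mcoeffC; case: eqP => [->|ne] //.
    by rewrite mcoeff_outdom //; apply/negP => /Hm.
  have H0 : e@_mone = 0 by move: (Hv (fun _ => 0)); rewrite {1}He evC.
  by rewrite He H0 malgC0E.
pose N := (\max_(m <- msupp e) m k).+1.
pose c j := \sum_(m <- msupp e | m k == j) << e@_m *g dropv k m >>.
have decomp : e = \sum_(j < N) c j * Xv D k ^+ j.
  rewrite /c (eq_bigr (fun j : 'I_N => \sum_(m <- msupp e | m k == j) << e@_m *g m >>)); last first.
    move=> j _; rewrite mulr_suml; apply: eq_bigr => m /eqP <-.
    by rewrite XvX malgM_def fgmulUU mulr1 dropv_mul.
  rewrite (eq_bigr (fun j : 'I_N => \sum_(m <- msupp e) if m k == j then << e@_m *g m >> else 0));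
    last by move=> j _; rewrite big_mkcond.
  rewrite exchange_big /= {1}(monalgE e); apply: eq_big_seq => m Hm.
  have lt : (m k < N)%N.
    by rewrite ltnS; apply: leq_bigmax_seq.
  rewrite (bigD1 (Ordinal lt)) //= eqxx big1 ?addr0 // => j ne.
  rewrite ifF //; apply/negbTE; move: ne; apply: contra => /eqP E.
  by apply/eqP/val_inj; rewrite /= -E.
have Hc : forall j, (j < N)%N -> c j = 0.
  move=> j ltj; apply: IH.
    move=> m' Hm' i Hi.
    move: Hm'; rewrite -mcoeff_neq0 /c raddf_sum /=.
    case: (boolP (has (fun m => dropv k m == m') (msupp e))) => [/hasP [m Hm /eqP Hd]|/hasPn Hn]; last first.
      by rewrite big1_seq ?eqxx // => m /andP [_ /Hn]; rewrite mcoeffU => /negbTE ->; rewrite mulr0n.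
    move=> _; rewrite -Hd in Hi; case/andP: (finsupp_dropv Hi) => ne /(Hs _ Hm).
    by rewrite in_cons (negbTE ne).
  move=> v.
  pose q := \poly_(i < N) ev v (c i).
  have Hq : q = 0.
    apply: poly_inf => t.
    pose v' := fun x => if x == k then t else v x.
    have Ec : forall i, ev v' (c i) = ev v (c i).
      move=> i; rewrite /c !raddf_sum /=; apply: eq_bigr => m _; rewrite !evU; congr (_ * _).
      rewrite /hv; apply: eq_big_seq => i' /finsupp_dropv /andP [ne _].
      by rewrite /v' (negbTE ne).
    have E1 : ev v' e = \sum_(i < N) ev v (c i) * t ^+ i.
      rewrite {1}decomp rmorph_sum; apply: eq_bigr => i _.
      by rewrite rmorphM rmorphXn /= evX /v' eqxx Ec.
    by rewrite horner_poly -E1 Hv.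
  by move: (congr1 (fun p : {poly D} => p`_j) Hq); rewrite coef_poly ltj coef0.
by rewrite decomp big1 // => j _; rewrite Hc // mul0r.
Qed.

Lemma PI (e : calA D) : (forall v, ev v e = 0) -> e = 0.
Proof.
move=> Hv.
have Hs : supp_in (flatten [seq (finsupp m : seq genvar) | m : cmonom genvar <- msupp e]) e.
  move=> m Hm i Hi; apply/flatten_mapP; exists m => //.
exact: (PI_ks Hs Hv).
Qed.

End PI.

Section Mx.
Variable R : comNzRingType.

Lemma mx2_eta (M : 'M[R]_2) : M = mx2 (M 0 0) (M 0 1) (M 1 0) (M 1 1).
Proof.
apply/matrixP => r c; rewrite mxE.
case: r => [[|[|r]] Hr] //; case: c => [[|[|c]] Hc] //=; congr (M _ _); exact: val_inj.
Qed.

Lemma mx2E (a b c d : R) :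
  [/\ (mx2 a b c d) 0 0 = a, (mx2 a b c d) 0 1 = b, (mx2 a b c d) 1 0 = c & (mx2 a b c d) 1 1 = d].
Proof. by rewrite !mxE. Qed.

Lemma tr2 (M : 'M[R]_2) : \tr M = M 0 0 + M 1 1.
Proof. by rewrite /mxtrace big_ord_recl big_ord1; congr (_ + M _ _); apply: val_inj. Qed.

Lemma mul2E (M N : 'M[R]_2) i j : (M * N) i j = M i 0 * N 0 j + M i 1 * N 1 j.
Proof.
rewrite -mulmxE mxE big_ord_recl big_ord1; congr (_ + M _ _ * N _ _); exact: val_inj.
Qed.

Lemma map_mx2 (S : comNzRingType) (f : {rmorphism R -> S}) (a b c d : R) :
  map_mx f (mx2 a b c d) = mx2 (f a) (f b) (f c) (f d).
Proof.
apply/matrixP => r s; rewrite !mxE.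
by case: ifP => _; case: ifP.
Qed.
Lemma tr_comm (M N : 'M[R]_2) : \tr (M * N - N * M) = 0.
Proof.
rewrite mxtraceD -scaleN1r mxtraceZ mulN1r.
by rewrite -!mulmxE mxtrace_mulC subrr.
Qed.
End Mx.

Lemma Rgrad_shape (D : comNzRingType) b (x : 'M[calA D]_2) : Rgrad b x ->
  if b then x 0 0 = 0 /\ x 1 1 = 0 else x 0 1 = 0 /\ x 1 0 = 0.
Proof.
elim => {b x}.
- by rewrite !mxE.
- by move=> i; rewrite /Ygen !mxE.
- by move=> i; rewrite /Zgen !mxE.
- by move=> [] x y _ [h1 h2] _ [h3 h4]; rewrite !mxE h1 h2 h3 h4 addr0.
- move=> [] [] x y _ [h1 h2] _ [h3 h4] /=; rewrite !mul2E ?h1 ?h2 ?h3 ?h4;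
    by rewrite ?mul0r ?mulr0 ?addr0.
- by move=> [] d x _ [h1 h2]; rewrite /scA !mxE h1 h2 mulr0.
Qed.

Lemma inS_tr (D : comNzRingType) (x : 'M[calA D]_2) : inS x -> \tr x = 0.
Proof.
elim => {x}.
- by move=> i; rewrite tr2 /Ygen !mxE /= addrN.
- by move=> i; rewrite tr2 /Zgen !mxE /= addr0.
- by move=> x y _ h1 _ h2; rewrite mxtraceD h1 h2 addr0.
- by move=> d x _ h; rewrite /scA mxtraceZ h mulr0.
- by move=> x y _ _ _ _; apply: tr_comm.
Qed.

Lemma inS_inR (D : comNzRingType) (x : 'M[calA D]_2) : inS x -> inR x.
Proof.
elim => {x} [i|i|x y _ h1 _ h2|d x _ h|x y _ h1 _ h2].
- exact: inR_Y.
- exact: inR_Z.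
- exact: inR_add.
- exact: inR_scale.
- apply: inR_add; first by apply: inR_mul.
  have -> : - (y * x) = scA (-1) (y * x) by rewrite /scA rmorphN1 scaleN1r.
  by apply: inR_scale; apply: inR_mul.
Qed.

Lemma Rgrad_inR (D : comNzRingType) b (x : 'M[calA D]_2) : Rgrad b x -> inR x.
Proof.
elim => {b x} [|i|i|b x y _ h1 _ h2|b c x y _ h1 _ h2|b d x _ h].
- exact: inR_1.
- exact: inR_Y.
- exact: inR_Z.
- exact: inR_add.
- exact: inR_mul.
- exact: inR_scale.
Qed.

Lemma map_scA (D : comNzRingType) v (d : D) :
  map_mx (ev v) (scA d 1) = d%:A :> 'M[D]_2.
Proof. by rewrite /scA map_mxZ map_mx1 /= evC. Qed.

Lemma map_shape (D : comNzRingType) v (M : 'M[calA D]_2) b :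
  inS M -> Rgrad b M -> sl2 (map_mx (ev v) M) /\ M2grading b (map_mx (ev v) M).
Proof.
move=> /inS_tr Ht /Rgrad_shape Hg; split.
  by rewrite /sl2 tr2 !mxE -rmorphD -tr2 Ht rmorph0.
by case: b Hg => [[h1 h2]|[h1 h2]]; rewrite /M2grading !mxE h1 h2 rmorph0.
Qed.

Section Main.
Variables (D : idomainType) (Hinf : forall s : seq D, exists d : D, d \notin s).

Definition gR (x : letter) : 'M[calA D]_2 := if x.1 then Zgen D x.2 else Ygen D x.2.
Definition scR : {rmorphism D -> 'M[calA D]_2} := GRing.in_alg 'M[calA D]_2 \o malgC.

Lemma scRE d : scR d = scA d 1.
Proof. by []. Qed.

Lemma scR_central d a : scR d * a = a * scR d.
Proof. by rewrite scRE /scA mulr_algl mulr_algr. Qed.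

Definition fR f := feval scR gR f.

Lemma fRD f g : fR (f + g) = fR f + fR g.
Proof. exact: fevalD. Qed.
Lemma fRN f : fR (- f) = - fR f.
Proof. exact: fevalN. Qed.
Lemma fRM f g : fR (f * g) = fR f * fR g.
Proof. exact: (fevalM _ scR_central). Qed.
Lemma fR1 : fR 1 = 1.
Proof. exact: feval1. Qed.
Lemma fRZ d f : fR (d *: f) = scA d (fR f).
Proof. by rewrite /fR (fevalZ _ scR_central) /= /scA mulr_algl. Qed.
Lemma fRX x : fR << fmu x >> = gR x.
Proof. exact: fevalX. Qed.

Lemma key_Id f : fR f = 0 -> Id_M2sl2 f.
Proof.
move=> H s Hs0 Hs1.
pose v : genvar -> D := fun x => if val x.2 == 0%N then s (false, x.1) 0 0
  else if val x.2 == 1%N then s (true, x.1) 0 1 else s (true, x.1) 1 0.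
have -> : feval (fun d : D => d%:A : 'M[D]_2) s f = map_mx (ev v) (fR f).
  rewrite /fR (feval_map (map_mx (ev v))); apply: feval_ext => [d|[[] i]] /=.
  - exact: esym (map_scA v d).
  - case: (Hs1 i) => /= _ [h00 h11].
    rewrite /Zgen map_mx2 rmorph0 {1}(mx2_eta (s (true, i))) h00 h11.
    by congr mx2; [exact: esym (evX v (i, 1)) | exact: esym (evX v (i, 2))].
  - case: (Hs0 i) => /= Htr [h01 h10].
    have h11 : s (false, i) 1 1 = - s (false, i) 0 0.
      by apply/eqP; rewrite -addr_eq0 addrC -tr2 Htr.
    rewrite /Ygen map_mx2 rmorph0 rmorphN {1}(mx2_eta (s (false, i))) h01 h10 h11.
    by congr mx2; [exact: esym (evX v (i, 0)) | congr (- _); exact: esym (evX v (i, 0))].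
by rewrite H raddf0.
Qed.

Lemma pre_ex x : inR x -> exists f, fR f = x.
Proof.
elim => {x} [|i|i|x y _ [f <-] _ [g <-]|x y _ [f <-] _ [g <-]|d x _ [f <-]].
- by exists 1; rewrite fR1.
- by exists << fmu (false, i) >>; rewrite fRX.
- by exists << fmu (true, i) >>; rewrite fRX.
- by exists (f + g); rewrite fRD.
- by exists (f * g); rewrite fRM.
- by exists (d *: f); rewrite fRZ.
Qed.

End Main.

Theorem mainTheorem1 (D : idomainType)
    (D_infinite : forall s : seq D, exists d : D, d \notin s) :
  (* (R, S) satisfies every weak graded identity of (M_2(D), sl_2(D)) *)
  (forall f : freeAlg D, Id_M2sl2 f ->
     weak_graded_identity (fun d : D => scA d 1)
       (Rgrad false) (Rgrad true) (@inS D) f)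
  /\
  (* universal property *)
  (forall (A : algType D) (Ag : bool -> A -> Prop) (L : A -> Prop),
     graded_pair Ag L ->
     (forall f : freeAlg D, Id_M2sl2 f ->
        weak_graded_identity (fun d : D => d%:A) (Ag false) (Ag true) L f) ->
     forall a b : nat -> A,
       (forall i, L (a i) /\ Ag false (a i)) ->
       (forall i, L (b i) /\ Ag true (b i)) ->
       exists psi : 'M[calA D]_2 -> A,
         [/\ graded_alg_hom_on_R Ag psi,
             (forall i, psi (Ygen D i) = a i /\ psi (Zgen D i) = b i),
             (forall psi' : 'M[calA D]_2 -> A,
                graded_alg_hom_on_R Ag psi' ->
                (forall i, psi' (Ygen D i) = a i /\ psi' (Zgen D i) = b i) ->
                forall x, inR x -> psi' x = psi x)
           & (forall x, inS x -> L (psi x))]).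
Proof.
split.
  move=> f Hf s Hs0 Hs1; apply/matrixP => r c; rewrite [RHS]mxE.
  apply: (PI D_infinite) => v.
  have E : map_mx (ev v) (feval (fun d : D => scA d 1) s f)
           = feval (fun d : D => d%:A : 'M[D]_2) (map_mx (ev v) \o s) f.
    rewrite (feval_map (map_mx (ev v))); apply: feval_ext => [d|x] //=.
    exact: map_scA.
  have := congr1 (fun M : 'M[D]_2 => M r c) E; rewrite mxE => ->.
  rewrite Hf ?mxE // => i /=.
    by case: (Hs0 i) => h1 h2; exact: (map_shape v h1 h2).
  by case: (Hs1 i) => h1 h2; exact: (map_shape v h1 h2).
move=> A Ag L [[[sub0 sub1] Hdec Hinter Hone Hmul] [subL HLbr] HLdec] HId a b Ha Hb.
have subg : forall bb, submodule (Ag bb) by case.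
pose ab : letter -> A := fun x => if x.1 then b x.2 else a x.2.
have cenA : forall (d : D) (y : A), in_alg A d * y = y * in_alg A d.
  by move=> d y; rewrite /= mulr_algl mulr_algr.
pose fA f := feval (in_alg A) ab f.
have HIdA : forall f, fR f = 0 -> fA f = 0.
  move=> f /key_Id /HId H; rewrite /fA.
  apply: H => i /=; [exact: Ha | exact: Hb].
pose pre (x : 'M[calA D]_2) : freeAlg D := epsilon (inhabits (0 : freeAlg D)) (fun f : freeAlg D => fR f = x).
pose psi (x : 'M[calA D]_2) : A := fA (pre x).
have psiE : forall f, psi (fR f) = fA f.
  move=> f.
  have Hp : fR (pre (fR f)) = fR f.
    exact: (epsilon_spec (inhabits 0) (fun g => fR g = fR f) (ex_intro _ f erefl)).
  have : fR (pre (fR f) - f) = 0 by rewrite fRD fRN Hp subrr.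
  move/HIdA; rewrite /fA fevalD fevalN => /eqP; rewrite subr_eq0 => /eqP.
  by [].
have fAM : forall f g, fA (f * g) = fA f * fA g by move=> f g; rewrite /fA (fevalM _ cenA).
have psiD : forall x y, inR x -> inR y -> psi (x + y) = psi x + psi y.
  move=> x y /pre_ex [f <-] /pre_ex [g <-]; rewrite -fRD.
  etransitivity; first exact: psiE.
  by rewrite /fA fevalD; congr (_ + _); apply: esym; exact: psiE.
have psiM : forall x y, inR x -> inR y -> psi (x * y) = psi x * psi y.
  move=> x y /pre_ex [f <-] /pre_ex [g <-]; rewrite -fRM.
  etransitivity; first exact: psiE.
  by rewrite fAM; congr (_ * _); apply: esym; exact: psiE.
have psiZ : forall (d : D) x, inR x -> psi (scA d x) = d *: psi x.
  move=> d x /pre_ex [f <-]; rewrite -fRZ.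
  etransitivity; first exact: psiE.
  by rewrite /fA (fevalZ _ cenA) /= mulr_algl; congr (_ *: _); apply: esym; exact: psiE.
have psi1 : psi 1 = 1.
  transitivity (psi (fR 1)); first by rewrite fR1.
  etransitivity; first exact: psiE.
  exact: feval1.
have psiY : forall i, psi (Ygen D i) = a i.
  move=> i; transitivity (psi (fR << fmu (false, i) >>)); first by rewrite fRX.
  etransitivity; first exact: psiE.
  exact: fevalX.
have psiZg : forall i, psi (Zgen D i) = b i.
  move=> i; transitivity (psi (fR << fmu (true, i) >>)); first by rewrite fRX.
  etransitivity; first exact: psiE.
  exact: fevalX.
have fAD : forall f g, fA (f + g) = fA f + fA g by move=> f g; rewrite /fA fevalD.
have fAN : forall f, fA (- f) = - fA f by move=> f; rewrite /fA fevalN.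
clearbody psi.
exists psi; split.
- split; [exact: psi1 | exact: psiD | exact: psiM | exact: psiZ | ].
  move=> bb x; elim => {bb x} [|i|i|bb x y Hx h1 Hy h2|bb c x y Hx h1 Hy h2|bb d x Hx h1].
  + by rewrite psi1.
  + by rewrite psiY; case: (Ha i).
  + by rewrite psiZg; case: (Hb i).
  + case: (subg bb) => _ Hadd _; rewrite psiD; [exact: Hadd | exact: Rgrad_inR Hx | exact: Rgrad_inR Hy].
  + rewrite psiM; [exact: Hmul | exact: Rgrad_inR Hx | exact: Rgrad_inR Hy].
  + case: (subg bb) => _ _ Hsc; rewrite psiZ; [exact: Hsc | exact: Rgrad_inR Hx].
- by move=> i; split.
- move=> psi' [h1 hD hM hZ _] hg x; elim => {x} [|i|i|x y Hx h1x Hy h1y|x y Hx h1x Hy h1y|d x Hx h1x].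
  + by rewrite h1 psi1.
  + by rewrite (hg i).1 psiY.
  + by rewrite (hg i).2 psiZg.
  + by rewrite hD // psiD // h1x h1y.
  + by rewrite hM // psiM // h1x h1y.
  + by rewrite hZ // psiZ // h1x.
- move=> x; elim => {x} [i|i|x y Hx h1x Hy h1y|d x Hx h1x|x y Hx h1x Hy h1y].
  + by rewrite psiY; case: (Ha i).
  + by rewrite psiZg; case: (Hb i).
  + case: subL => _ Hadd _; rewrite psiD; [exact: Hadd | exact: inS_inR Hx | exact: inS_inR Hy].
  + case: subL => _ _ Hsc; rewrite psiZ; [exact: Hsc | exact: inS_inR Hx].
  + move: (pre_ex (inS_inR Hx)) (pre_ex (inS_inR Hy)) h1x h1y => [f Ef] [g Eg].
    rewrite -Ef -Eg => Lf Lg.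
    have -> : fR f * fR g - fR g * fR f = fR (f * g - g * f) by rewrite fRD fRN !fRM.
    by rewrite psiE fAD fAN !fAM -!psiE; apply: HLbr.
Qed.
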